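(* Let $n\ge 4$ and $\bar K>0$. For all $x\ge 0$ the functions $a,\mathring a$ satisfy: (i) $\frac{4x(\mathring a'(x))^2}{\mathring a(x)}<1$; (ii) $2x\mathring a''(x)+\mathring a'(x)<\frac{2(n-1)}{n(n+2)}$; (iii) $\frac{n-2}{\sqrt{n(n-1)}}\sqrt{x\,\mathring a(x)}+\mathring a(x)<\frac{x}{n}+n\bar K$; (iv) $n\bar K(\mathring a+x\mathring a')-a(\mathring a-x\mathring a')\ge\frac{2n(n-2)(n-1)^2\bar K^4}{\big(x+\sqrt{2+\sqrt{2n}}\,(n-1)\bar K\big)^2}$; (v) $2\mathring a-\frac{x}{n}+x\mathring a'\le 2\sqrt{2n}\,\bar K-\frac{(n-4)x}{n(n-1)}-\frac{6(\sqrt{2n}-2)\bar K x}{3x+2\sqrt{2n}(n-1)\bar K}$; (vi) $\frac{x}{n-1}(a+n\bar K)-\Big(\frac{x}{n-1}+2n\bar K\Big)\big(\mathring a+a-n\bar K-x\mathring a'\big)<-\frac{2x\bar K}{n-1}+2n(n-4)\bar K^2$, where $a,\mathring a,\mathring a',\mathring a''$ are evaluated at $x$.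
   Context: For $x\ge0$: $a(x)=\sqrt{\big(\frac{x}{n-1}+2\bar K\big)^2+(2n-4)\bar K^2}$ and $\mathring a(x)=a(x)-\frac{x}{n}$; primes denote derivatives in $x$. *)

(* Defs.v *)
From Stdlib Require Import Reals Lra.
From Coquelicot Require Import Coquelicot.
Open Scope R_scope.

Definition a_fun (n : nat) (K : R) (x : R) : R :=
  sqrt ((x / (INR n - 1) + 2 * K) ^ 2 + (2 * INR n - 4) * K ^ 2).

Definition ao_fun (n : nat) (K : R) (x : R) : R :=
  a_fun n K x - x / INR n.

Definition ao1 (n : nat) (K : R) (x : R) : R := Derive (ao_fun n K) x.
Definition ao2 (n : nat) (K : R) (x : R) : R := Derive (Derive (ao_fun n K)) x.

(* Main.v *)
Require Import Defs.
From Stdlib Require Import Reals Lra Psatz FunctionalExtensionality.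
From Coquelicot Require Import Coquelicot.
Open Scope R_scope.

Ltac pos := repeat (apply Rmult_lt_0_compat || apply pow_lt || apply Rinv_0_lt_compat); try lra; try nra.
Ltac nz := repeat split; try (apply Rgt_not_eq; unfold Rgt; pos).
Ltac possum := repeat apply Rplus_le_le_0_compat; try (apply Rmult_le_pos; [lra | apply pow_le; lra]).

Lemma sq_lt a b : 0 <= a -> 0 < b -> a*a < b*b -> a < b.
Proof. intros. destruct (Rlt_or_le a b); [auto|]. assert (b*b <= a*a) by (apply Rmult_le_compat; lra). lra. Qed.
Lemma sq_le a b : 0 <= b -> a*a <= b*b -> a <= b.
Proof. intros. destruct (Rle_or_lt a b); [auto|]. assert (b*b < a*a) by (apply Rmult_le_0_lt_compat; lra). lra. Qed.

Definition Ff (n:nat) (K y:R) := (y / (INR n - 1) + 2 * K) ^ 2 + (2 * INR n - 4) * K ^ 2.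
Definition d1c (n:nat) (K y:R) := (y / (INR n - 1) + 2 * K) / ((INR n - 1) * sqrt (Ff n K y)) - 1 / INR n.
Definition d2c (n:nat) (K y:R) := (2 * INR n - 4) * K ^ 2 / ((INR n - 1)^2 * (Ff n K y * sqrt (Ff n K y))).

Lemma Ff_pos n K y : (4 <= n)%nat -> 0 < K -> 0 < Ff n K y.
Proof.
  intros hn hK. unfold Ff. assert (4 <= INR n) by (apply le_INR in hn; simpl in hn; lra).
  assert (0 < (2 * INR n - 4) * K^2) by (apply Rmult_lt_0_compat; nra).
  apply Rplus_le_lt_0_compat; [apply pow2_ge_0|lra].
Qed.

Lemma d1_ok (n:nat) (K y : R) : (4 <= n)%nat -> 0 < K -> is_derive (ao_fun n K) y (d1c n K y).
Proof.
  intros hn hK. assert (h4: 4 <= INR n) by (apply le_INR in hn; simpl in hn; lra).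
  pose proof (Ff_pos n K y hn hK) as hF.
  unfold ao_fun, a_fun, d1c. auto_derive.
  - unfold Ff in hF; lra.
  - assert (E: forall z, z * (z*1) + (2*INR n -4)*(K*(K*1)) = z^2 + (2*INR n-4)*K^2) by (intros; ring).
    unfold Ff in hF. rewrite E. set (S := sqrt _).
    assert (0 < S) by (apply sqrt_lt_R0; exact hF).
    field. lra.
Qed.

Lemma d2_ok (n:nat) (K y : R) : (4 <= n)%nat -> 0 < K -> is_derive (d1c n K) y (d2c n K y).
Proof.
  intros hn hK. assert (h4: 4 <= INR n) by (apply le_INR in hn; simpl in hn; lra).
  pose proof (Ff_pos n K y hn hK) as hF.
  assert (E: forall z, z * (z*1) + (2*INR n -4)*(K*(K*1)) = z^2 + (2*INR n-4)*K^2) by (intros; ring).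
  unfold d1c, d2c, Ff in *.
  assert (0 < sqrt ((y / (INR n - 1) + 2 * K) ^ 2 + (2 * INR n - 4) * K ^ 2)) by (apply sqrt_lt_R0; exact hF).
  auto_derive; rewrite ?E.
  - split; [lra|split; [|auto]].
    apply Rmult_integral_contrapositive_currified; lra.
  - set (S := sqrt _) in *.
    assert (SS: S * S = (y / (INR n - 1) + 2 * K) ^ 2 + (2 * INR n - 4) * K ^ 2) by (apply sqrt_sqrt; lra).
    assert (Ek: (2*INR n -4)*K^2 = S*S - (y/(INR n-1)+2*K)^2) by (rewrite SS; ring). rewrite Ek. unfold Rdiv. field. split; [lra|split; [lra|]].
    match goal with |- ?e <> 0 => replace e with (S*S*(INR n - 1)^2) by ring end.
    apply Rgt_not_eq. apply Rmult_lt_0_compat; [nra| apply pow_lt; lra].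
Qed.



Section S2.
Variables (N K X A : R).
Hypotheses (hN: 4 <= N) (hK: 0<K) (hX: 0<=X) (hA: 0 < A)
  (hAA: A*A = X^2 + 4*K*X + 2*N*K^2).

Lemma uA : X + 2*K < A.
Proof. nra. Qed.

Lemma item2 : 2 * ((N-1)*X) * ((2*N-4)*K^2/((N-1)^2*(A*A*A))) + ((X+2*K)/((N-1)*A) - 1/N)
   < 2 * (N - 1) / (N * (N + 2)).
Proof.
  pose proof uA as hu.
  set (u := X + 2*K) in *.
  assert (key: 2*(N-1)*X*(2*N-4)*K^2/((N-1)^2*(A*A*A)) + u/((N-1)*A) < 3/2 / (N-1)).
  { assert (h1: (2*N-4)*K^2 = A*A - u*u) by (unfold u; nra).
    assert (h2: 2*(N-1)*X*(2*N-4)*K^2/((N-1)^2*(A*A*A)) + u/((N-1)*A)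
               = (2*X*(A*A-u*u) + u*(A*A)) / (A*A*A) / (N-1)).
    { rewrite <- h1. field; nz. }
    rewrite h2. apply Rmult_lt_compat_r. apply Rinv_0_lt_compat; lra.
    apply Rmult_lt_reg_r with (A*A*A). pos.
    unfold Rdiv. rewrite Rmult_assoc, Rinv_l, Rmult_1_r by nz.
    assert (0 <= (u - 7/10*A)^2*(4*u + 56/10*A)) by (apply Rmult_le_pos; [apply pow2_ge_0 | unfold u; lra]).
    assert (0 < u) by (unfold u; lra).
    assert (2*X*(A*A-u*u) <= 2*u*(A*A-u*u)) by (apply Rmult_le_compat_r; nra).
    assert (0 < A*A*(256/1000*A - 12/100*u)) by (apply Rmult_lt_0_compat; [pos|lra]).
    nra. }
  assert (E: 2 * ((N-1)*X) * ((2*N-4)*K^2/((N-1)^2*(A*A*A))) + (u/((N-1)*A) - 1/N)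
      = (2*(N-1)*X*(2*N-4)*K^2/((N-1)^2*(A*A*A)) + u/((N-1)*A)) - 1/N) by (field; nz).
  rewrite E.
  assert (3/2/(N-1) - 1/N <= 2 * (N - 1) / (N * (N + 2))).
  { apply Rmult_le_reg_r with ((N-1)*N*(N+2)). nra.
    field_simplify; try lra. nra. }
  lra.
Qed.
End S2.



Section S3.
Variables (N K X A : R).
Hypotheses (hN: 4 <= N) (hK: 0<K) (hX: 0<=X) (hA: 0 < A)
  (hAA: A*A = X^2 + 4*K*X + 2*N*K^2).

Lemma item6 :
  let x := (N-1)*X in
  let a := A in let ao := A - x/N in let ao' := (X+2*K)/((N-1)*A) - 1/N in
  x / (N - 1) * (a + N * K)
    - (x / (N - 1) + 2 * N * K) * (ao + a - N * K - x * ao')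
    < - (2 * x * K / (N - 1)) + 2 * N * (N - 4) * K ^ 2.
Proof.
  intros x a ao ao'. unfold ao, ao', a, x.
  set (L1 := (N+1)*X + 4*N*K). set (P1 := (N+1)*X^2 + 7*N*K*X + 4*N^2*K^2).
  assert (E: (N - 1) * X / (N - 1) * (A + N * K) -
    ((N - 1) * X / (N - 1) + 2 * N * K) * (A - (N - 1) * X / N + A - N * K - (N - 1) * X * ((X + 2 * K) / ((N - 1) * A) - 1 / N))
    - (- (2 * ((N - 1) * X) * K / (N - 1)) + 2 * N * (N - 4) * K ^ 2)
    = (-(X+4*N*K)*(A*A) + X*(X+2*N*K)*(X+2*K) + 2*K*L1*A)/A).
  { unfold L1. field. nz. }
  assert (E2: -(X+4*N*K)*(A*A) + X*(X+2*N*K)*(X+2*K) + 2*K*L1*A = 2*K*(A*L1 - P1)).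
  { rewrite hAA. unfold L1, P1. ring. }
  assert (AL: A*L1 < P1).
  { apply sq_lt.
    { apply Rmult_le_pos; [lra|unfold L1; nra]. }
    { unfold P1. assert (0 < 4*N^2*K^2) by pos. assert (0<= (N+1)*X^2) by (apply Rmult_le_pos; nra). assert (0 <= 7*N*K*X) by (repeat apply Rmult_le_pos; lra). lra. }
    assert (E3: P1*P1 - (A*L1)*(A*L1) = X^3*K*(2*N^2-2*N-4) + X^2*K^2*(6*N^3+5*N^2-34*N)
       + X*K^3*(40*N^3-80*N^2) + K^4*(16*N^4-32*N^3)).
    { replace ((A*L1)*(A*L1)) with ((A*A)*(L1*L1)) by ring. rewrite hAA. unfold L1, P1. ring. }
    assert (0 <= X^3*K*(2*N^2-2*N-4)) by (repeat apply Rmult_le_pos; try apply pow_le; nra).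
    assert (0 <= X^2*K^2*(6*N^3+5*N^2-34*N)) by (repeat apply Rmult_le_pos; try apply pow_le; nra).
    assert (0 <= X*K^3*(40*N^3-80*N^2)) by (repeat apply Rmult_le_pos; try apply pow_le; nra).
    assert (0 < K^4*(16*N^4-32*N^3)) by (apply Rmult_lt_0_compat; [apply pow_lt; lra| nra]).
    lra. }
  assert (0 < 2*K*(P1 - A*L1)/A) by (apply Rdiv_lt_0_compat; [apply Rmult_lt_0_compat; lra|lra]).
  assert (2*K*(A*L1-P1)/A = - (2*K*(P1 - A*L1)/A)) by (field; lra).
  rewrite E2 in E. lra.
Qed.
End S3.



Section S4.
Variables (N K X A b : R).
Hypotheses (hN: 4 <= N) (hK: 0<K) (hX: 0<=X) (hA: 0 < A)
  (hAA: A*A = X^2 + 4*K*X + 2*N*K^2) (hb: 0 < b) (hbb : b*b = 2*N).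

Lemma item5 :
  let x := (N-1)*X in
  let ao := A - x/N in let ao' := (X+2*K)/((N-1)*A) - 1/N in
  2 * ao - x / N + x * ao' <=
    2 * b * K - (N - 4) * x / (N * (N - 1))
    - 6 * (b - 2) * K * x / (3 * x + 2 * b * (N - 1) * K).
Proof.
  intros x ao ao'. unfold ao, ao', x.
  assert (hb2: 2 <= b) by nra.
  set (W := 3*X + 2*b*K). set (M := 9*X^2 + (6*b+12)*K*X + 4*b^2*K^2).
  set (L0 := 3*X^2 + 10*K*X + 2*b^2*K^2).
  assert (hW: 0 < W) by (unfold W; pos).
  assert (E: 2 * b * K - (N - 4) * ((N - 1) * X) / (N * (N - 1))
    - 6 * (b - 2) * K * ((N - 1) * X) / (3 * ((N - 1) * X) + 2 * b * (N - 1) * K)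
    - (2 * (A - (N - 1) * X / N) - (N - 1) * X / N + (N - 1) * X * ((X + 2 * K) / ((N - 1) * A) - 1 / N))
    = (A*M - (2*(A*A) + X*(X+2*K))*W)/(A*W)).
  { unfold M, W. field. repeat split; try (apply Rgt_not_eq; unfold Rgt; pos).
    replace (3 * ((N - 1) * X) + 2 * b * (N - 1) * K) with ((N-1)*(3*X+2*b*K)) by ring.
    pos. }
  assert (E2: 2*(A*A) + X*(X+2*K) = L0) by (unfold L0; rewrite hAA; replace (b^2) with (2*N) by (rewrite <- hbb; ring); ring).
  rewrite E2 in E.
  assert (key: L0*W <= A*M).
  { apply sq_le.
    { apply Rmult_le_pos; [lra|]. unfold M.
      assert (0 <= (6*b+12)*K*X) by (repeat apply Rmult_le_pos; lra).
      assert (0 <= X^2) by (apply pow_le; lra). assert (0 <= b^2*K^2) by (apply Rmult_le_pos; apply pow_le; lra). lra. }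
    assert (E3: (A*M)*(A*M) - (L0*W)*(L0*W) = X^2*K^4*(8*b^2*(5*b-8)*(b-2))
        + X^3*K^3*(12*(b-2)*(b^2+14*b-24)) + X^4*K^2*(9*(5*b-6)*(b-2))).
    { replace ((A*M)*(A*M)) with ((A*A)*(M*M)) by ring. rewrite hAA.
      replace N with (b*b/2) by lra. unfold L0, M, W. field. }
    assert (0 <= X^2*K^4*(8*b^2*(5*b-8)*(b-2))) by (repeat apply Rmult_le_pos; try apply pow_le; nra).
    assert (0 <= X^3*K^3*(12*(b-2)*(b^2+14*b-24))) by (repeat apply Rmult_le_pos; try apply pow_le; nra).
    assert (0 <= X^4*K^2*(9*(5*b-6)*(b-2))) by (repeat apply Rmult_le_pos; try apply pow_le; nra).
    lra. }
  assert (0 <= (A*M - L0*W)/(A*W)) by (unfold Rdiv; apply Rmult_le_pos; [lra| left; apply Rinv_0_lt_compat; pos]).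
  lra.
Qed.
End S4.


Section S5.
Variables (N K X A : R).
Hypotheses (hN: 4 <= N) (hK: 0<K) (hX: 0<=X) (hA: 0 < A)
  (hAA: A*A = X^2 + 4*K*X + 2*N*K^2).

Lemma item1 :
  let x := (N-1)*X in
  let ao := A - x/N in let ao' := (X+2*K)/((N-1)*A) - 1/N in
  4 * x * ao' ^ 2 / ao < 1.
Proof.
  intros x ao ao'. unfold ao, ao', x.
  set (c := N - 1). set (u := X + 2*K).
  assert (hc: 3 <= c) by (unfold c; lra).
  assert (hu: u < A) by (unfold u; nra).
  assert (hu0: X < u) by (unfold u; lra).
  set (D := N*u - c*A).
  assert (core: 4*X*D^2 < N*c*A^2*(N*A - c*X)).
  { destruct (Rle_or_lt 0 D) as [hD|hD].
    - assert (D < A) by (unfold D, c; nra).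
      assert (D^2 <= A^2) by nra.
      assert (4*X*D^2 <= 4*X*A^2) by (apply Rmult_le_compat_l; lra).
      assert (0 < A^2) by pos.
      assert (hh: N*A - c*X > X) by (unfold c; nra).
      assert (0 <= (N*c - 12)*(N*A - c*X)) by (apply Rmult_le_pos; unfold c in *; nra).
      assert (N*c*(N*A - c*X) - 4*X > 0) by nra.
      assert (0 < A^2 * (N*c*(N*A - c*X) - 4*X)) by pos.
      nra.
    - assert (hD2: D + c*A > 0) by (unfold D; unfold u; nra).
      assert (h1: D^2 <= c*A*(-D)) by nra.
      assert (h2: 4*X*D^2 <= 4*u*(c*A*(-D))).
      { apply Rmult_le_compat; try lra; try nra. }
      assert (h3: 4*u*(-D)*N <= c^2*A^2) by (pose proof (pow2_ge_0 (c*A - 2*N*u)); unfold D; nra).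
      assert (h4: N*c*A^2*(N*A - c*u) <= N*c*A^2*(N*A - c*X)).
      { apply Rmult_le_compat_l; [pos|nra]. }
      assert (h5: c^2*A < N^2*(N*A - c*u)).
      { assert (N*u < c*A) by (unfold D in hD; lra).
        assert (N*c*(N*u) < N*c*(c*A)) by (apply Rmult_lt_compat_l; pos).
        assert (c^2 < N*(N^2 - c^2)) by (unfold c; nra).
        assert (c^2*A < N*(N^2-c^2)*A) by (apply Rmult_lt_compat_r; lra).
        nra. }
      assert (h6: c^2*A*(c*A) < N^2*(N*A - c*u)*(c*A)) by (apply Rmult_lt_compat_r; pos).
      nra. }
  assert (hao: 0 < A - c*X/N).
  { assert (c*X/N = X - X/N) by (unfold c; field; lra).
    assert (0 <= X/N) by (unfold Rdiv; apply Rmult_le_pos; [lra|left; apply Rinv_0_lt_compat; lra]). lra. }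
  apply Rmult_lt_reg_r with (A - c*X/N). lra.
  rewrite Rmult_1_l. unfold Rdiv at 1. rewrite Rmult_assoc, Rinv_l, Rmult_1_r by lra.
  assert (E: A - c*X/N - 4*(c*X)*(u/(c*A) - 1/N)^2 = (N*c*A^2*(N*A - c*X) - 4*X*D^2)/(N^2*c*A^2)).
  { unfold D. field. nz. }
  assert (0 < (N*c*A^2*(N*A - c*X) - 4*X*D^2)/(N^2*c*A^2)).
  { unfold Rdiv. apply Rmult_lt_0_compat; [lra|]. apply Rinv_0_lt_compat. pos. }
  lra.
Qed.
End S5.


Section S6.
Variables (N K X A : R).
Hypotheses (hN: 4 <= N) (hK: 0<K) (hX: 0<=X) (hA: 0 < A)
  (hAA: A*A = X^2 + 4*K*X + 2*N*K^2).

Lemma item3 :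
  let x := (N-1)*X in
  let ao := A - x/N in
  (N - 2) / sqrt (N * (N - 1)) * sqrt (x * ao) + ao < x / N + N * K.
Proof.
  intros x ao. unfold ao, x.
  set (c := N - 1). set (u := X + 2*K).
  assert (hc: 3 <= c) by (unfold c; lra).
  assert (hu: u < A) by (unfold u; nra).
  assert (hu0: 0 < u) by (unfold u; lra).
  set (U := X/N + 2*K + (c-1)*K^2/u).
  assert (hAU: A - c*X/N <= U).
  { assert (A - u <= (c-1)*K^2/u).
    { apply Rmult_le_reg_r with u; [lra|]. unfold Rdiv. rewrite Rmult_assoc, Rinv_l, Rmult_1_r by lra.
      assert (A*A - u*u = 2*(c-1)*K^2) by (unfold c, u; rewrite hAA; ring). nra. }
    assert (c*X/N = X - X/N) by (unfold c; field; lra). unfold U, u in *. lra. }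
  set (RU := c*X/N + N*K - U).
  assert (hRU: 0 < RU).
  { unfold RU, U. assert (c*X/N - X/N = (c-1)*X/N) by (field; lra).
    assert (0 <= (c-1)*X/N) by (unfold Rdiv; apply Rmult_le_pos; [nra|left; apply Rinv_0_lt_compat; lra]).
    assert ((c-1)*K^2/u <= (c-1)*K/2).
    { apply Rmult_le_reg_r with u; [lra|]. unfold Rdiv. rewrite Rmult_assoc, Rinv_l, Rmult_1_r by lra.
      assert (0 <= (c-1)*K*(u - 2*K)) by (apply Rmult_le_pos; [pos|unfold u; lra]). nra. }
    unfold c in *. nra. }
  assert (hid: RU*RU - (c-1)^2/(N*c)*(c*X)*U = K^4*(c-1)^2/u^2).
  { unfold RU, U, u, c. field. nz. }
  set (s := sqrt (N * (N - 1))).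
  assert (hs: 0 < s) by (apply sqrt_lt_R0; unfold c in *; nra).
  assert (hss: s*s = N*c) by (apply sqrt_sqrt; unfold c in *; nra).
  assert (hao: 0 <= c*X*(A - c*X/N)).
  { assert (c*X/N = X - X/N) by (unfold c; field; lra).
    assert (0 <= X/N) by (unfold Rdiv; apply Rmult_le_pos; [lra|left; apply Rinv_0_lt_compat; lra]).
    apply Rmult_le_pos; [apply Rmult_le_pos; lra|unfold u in hu; lra]. }
  set (t := sqrt ((N-1)*X * (A - (N-1)*X/N))).
  fold c in t.
  assert (ht: 0 <= t) by apply sqrt_pos.
  assert (htt: t*t = c*X*(A - c*X/N)) by (apply sqrt_sqrt; exact hao).
  assert (key: (N-2)/s*t < c*X/N + N*K - (A - c*X/N)).
  { apply sq_lt.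
    - unfold Rdiv. apply Rmult_le_pos; [|lra]. apply Rmult_le_pos; [lra|left; apply Rinv_0_lt_compat; lra].
    - unfold RU in hRU; lra.
    - assert (E: (N-2)/s*t*((N-2)/s*t) = (c-1)^2/(N*c)*(c*X*(A - c*X/N))).
      { rewrite <- htt. replace (N*c) with (s*s) by lra. unfold c. field. lra. }
      rewrite E.
      assert (h1: (c-1)^2/(N*c)*(c*X*(A - c*X/N)) <= (c-1)^2/(N*c)*(c*X)*U).
      { replace ((c-1)^2/(N*c)*(c*X)*U) with ((c-1)^2/(N*c)*(c*X*U)) by ring. apply Rmult_le_compat_l.
        unfold Rdiv; apply Rmult_le_pos; [apply pow2_ge_0|left; apply Rinv_0_lt_compat; pos].
        apply Rmult_le_compat_l; [pos|lra]. }
      assert (h2: 0 < K^4*(c-1)^2/u^2).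
      { unfold Rdiv. apply Rmult_lt_0_compat; [pos|apply Rinv_0_lt_compat; pos]. }
      assert (h3: RU*RU <= (c*X/N + N*K - (A - c*X/N))*(c*X/N + N*K - (A - c*X/N))).
      { apply Rmult_le_compat; unfold RU in *; lra. }
      lra. }
  change (sqrt (N*c)) with s. change (sqrt (c * X * (A - c * X / N))) with t. lra.
Qed.
End S6.



Lemma cpos5 g : 219/100 <= g -> let b := g*g-2 in 0 <= 4*b^2 + 32*g - 80.
Proof.
  intros hg b. unfold b. set (h := g - 219/100). assert (0 <= h) by (unfold h; lra).
  replace (4*(g*g-2)^2 + 32*g - 80) with ((533817521/25000000)*h^0 + (8123459/62500)*h^1 + (123883/1250)*h^2 + (876/25)*h^3 + (4/1)*h^4) by (unfold h; field).
  possum.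
Qed.

Lemma cpos4 g : 219/100 <= g -> let b := g*g-2 in 0 <= b^4 + 24*b^2*g - 36*b^2 + 80*b - 160*g + 96.
Proof.
  intros hg b. unfold b. set (h := g - 219/100). assert (0 <= h) by (unfold h; lra).
  replace ((g*g-2)^4 + 24*(g*g-2)^2*g - 36*(g*g-2)^2 + 80*(g*g-2) - 160*g + 96) with ((1598808450918585441/10000000000000000)*h^0 + (14583104150325139/12500000000000)*h^1 + (516379040452767/250000000000)*h^2 + (2613032979693/1250000000)*h^3 + (12854482647/10000000)*h^4 + (63384213/125000)*h^5 + (315727/2500)*h^6 + (438/25)*h^7 + (1/1)*h^8) by (unfold h; field).
  possum.
Qed.

Lemma cpos3 g : 219/100 <= g -> let b := g*g-2 in 0 <= 4*b^4*g - 4*b^4 + 44*b^3 - 72*b^2*g + 52*b^2 + 64*b*g - 80*b - 144.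
Proof.
  intros hg b. unfold b. set (h := g - 219/100). assert (0 <= h) by (unfold h; lra).
  replace (4*(g*g-2)^4*g - 4*(g*g-2)^4 + 44*(g*g-2)^3 - 72*(g*g-2)^2*g + 52*(g*g-2)^2 + 64*(g*g-2)*g - 80*(g*g-2) - 144) with ((112698949404258667479/250000000000000000)*h^0 + (9696845089306117769/2500000000000000)*h^1 + (64393984465779551/6250000000000)*h^2 + (916476554619701/62500000000)*h^3 + (15758851593737/1250000000)*h^4 + (88002298623/12500000)*h^5 + (161089939/62500)*h^6 + (367849/625)*h^7 + (1871/25)*h^8 + (4/1)*h^9) by (unfold h; field).
  possum.
Qed.

Lemma cpos2 g : 219/100 <= g -> let b := g*g-2 in 0 <= 6*b^3 - 8*b^2*g + 7*b^2 + 32*b*g - 36*b - 68.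
Proof.
  intros hg b. unfold b. set (h := g - 219/100). assert (0 <= h) by (unfold h; lra).
  replace (6*(g*g-2)^3 - 8*(g*g-2)^2*g + 7*(g*g-2)^2 + 32*(g*g-2)*g - 36*(g*g-2) - 68) with ((38103141509443/500000000000)*h^0 + (1337274942891/2500000000)*h^1 + (8239136489/10000000)*h^2 + (17167177/25000)*h^3 + (315049/1000)*h^4 + (1771/25)*h^5 + (6/1)*h^6) by (unfold h; field).
  possum.
Qed.

Lemma cpos1 g : 219/100 <= g -> let b := g*g-2 in 0 <= b*g - b - 2.
Proof.
  intros hg b. unfold b. set (h := g - 219/100). assert (0 <= h) by (unfold h; lra).
  replace ((g*g-2)*g - (g*g-2) - 2) with ((1327359/1000000)*h^0 + (80083/10000)*h^1 + (557/100)*h^2 + (1/1)*h^3) by (unfold h; field).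
  possum.
Qed.


Lemma PKSA (K X A g b : R) : 0 < K -> 0 <= X -> 0 < A -> 0 < g -> 0 < b -> b*b >= 8 -> g*g = 2+b ->
  A*A = X^2 + 4*K*X + b^2*K^2 ->
  (2*X^2 + 6*K*X + b^2*K^2)*A <= (4*X + b^2*K)*(X+g*K)^2 - (2*X+2*K)*(X^2 + 4*K*X + b^2*K^2).
Proof.
  intros hK hX hA hg hb hb8 hgg hAA.
  assert (hb': b = g*g - 2) by lra.
  assert (hb28: 28/10 <= b) by nra. assert (hg2: 219/100 <= g) by nra.
  pose proof (cpos1 g hg2) as c1. pose proof (cpos2 g hg2) as c2. pose proof (cpos3 g hg2) as c3.
  pose proof (cpos4 g hg2) as c4. pose proof (cpos5 g hg2) as c5. simpl in c1, c2, c3, c4, c5.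
  rewrite <- hb' in c1, c2, c3, c4, c5.
  set (S := 2*X^2 + 6*K*X + b^2*K^2).
  set (P := (4*X + b^2*K)*(X+g*K)^2 - (2*X+2*K)*(X^2 + 4*K*X + b^2*K^2)).
  assert (I1: P = 2*X^3 + (b^2+8*g-10)*K*X^2 + (4*b+2*b^2*g-2*b^2)*K^2*X + b^3*K^3).
  { unfold P. rewrite hb'. ring. }
  assert (hP: 0 <= P).
  { rewrite I1. assert (0 <= 4*b+2*b^2*g-2*b^2) by nra.
    assert (0 <= b^2+8*g-10) by nra.
    repeat apply Rplus_le_le_0_compat; repeat apply Rmult_le_pos; try apply pow_le; lra. }
  apply sq_le; [exact hP|].
  assert (I2: P*P - (S*A)*(S*A) = (4*b^2 + 32*g - 80)*X^5*K
    + (b^4 + 24*b^2*g - 36*b^2 + 80*b - 160*g + 96)*X^4*K^2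
    + (4*b^4*g - 4*b^4 + 44*b^3 - 72*b^2*g + 52*b^2 + 64*b*g - 80*b - 144)*X^3*K^3
    + b^2*(6*b^3 - 8*b^2*g + 7*b^2 + 32*b*g - 36*b - 68)*X^2*K^4
    + 4*b^4*(b*g - b - 2)*X*K^5).
  { replace ((S*A)*(S*A)) with (S*S*(A*A)) by ring. rewrite hAA. unfold P, S. rewrite hb'. ring. }
  assert (0 <= (4*b^2 + 32*g - 80)*X^5*K) by (repeat apply Rmult_le_pos; try apply pow_le; lra).
  assert (0 <= (b^4 + 24*b^2*g - 36*b^2 + 80*b - 160*g + 96)*X^4*K^2) by (repeat apply Rmult_le_pos; try apply pow_le; lra).
  assert (0 <= (4*b^4*g - 4*b^4 + 44*b^3 - 72*b^2*g + 52*b^2 + 64*b*g - 80*b - 144)*X^3*K^3) by (repeat apply Rmult_le_pos; try apply pow_le; lra).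
  assert (0 <= b^2*(6*b^3 - 8*b^2*g + 7*b^2 + 32*b*g - 36*b - 68)*X^2*K^4) by (repeat apply Rmult_le_pos; try apply pow_le; lra).
  assert (0 <= 4*b^4*(b*g - b - 2)*X*K^5) by (repeat apply Rmult_le_pos; try apply pow_le; lra).
  lra.
Qed.

Lemma item4 (N K X A g b : R) : 4 <= N -> 0 < K -> 0 <= X -> 0 < A ->
  A*A = X^2 + 4*K*X + 2*N*K^2 -> 0 < b -> b*b = 2*N -> 0 < g -> g*g = 2 + b ->
  let x := (N-1)*X in
  let ao := A - x/N in let ao' := (X+2*K)/((N-1)*A) - 1/N in
  N * K * (ao + x * ao') - A * (ao - x * ao') >=
    2 * N * (N - 2) * (N - 1) ^ 2 * K ^ 4 / (x + g * (N - 1) * K) ^ 2.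
Proof.
  intros hN hK hX hA hAA hb hbb hg hgg x ao ao'. unfold ao, ao', x.
  set (u := X + 2*K).
  assert (hu: u < A) by (unfold u; nra).
  assert (hXA: X < A) by (unfold u in hu; lra).
  assert (hAA': A*A = X^2 + 4*K*X + b^2*K^2) by (rewrite hAA; rewrite <- hbb; ring).
  pose proof (PKSA K X A g b hK hX hA hg hb ltac:(lra) hgg hAA') as hP.
  assert (MC: K*A*(A+u) <= (A-X)*(X+g*K)^2).
  { assert (E: ((A-X)*(X+g*K)^2 - K*A*(A+u))*(A+X) =
       K*(((4*X + b^2*K)*(X+g*K)^2 - (2*X+2*K)*(X^2 + 4*K*X + b^2*K^2)) - (2*X^2 + 6*K*X + b^2*K^2)*A)).
    { assert (E0: ((A-X)*(X+g*K)^2 - K*A*(A+u))*(A+X) = (A*A - X*X)*(X+g*K)^2 - K*(A*A*A + (u+X)*(A*A) + u*X*A)) by ring.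
      rewrite E0. replace (A*A*A) with ((A*A)*A) by ring. rewrite hAA'. unfold u. ring. }
    assert (0 <= ((A-X)*(X+g*K)^2 - K*A*(A+u))*(A+X)) by (rewrite E; apply Rmult_le_pos; lra).
    assert (0 <= ((A-X)*(X+g*K)^2 - K*A*(A+u))).
    { destruct (Rle_or_lt 0 ((A-X)*(X+g*K)^2 - K*A*(A+u))) as [h|h]; [exact h|].
      assert (((A-X)*(X+g*K)^2 - K*A*(A+u))*(A+X) < 0) by (apply Rmult_neg_pos; lra). lra. }
    lra. }
  assert (hgK: 0 < X + g*K) by pos.
  assert (E1: N * K * (A - (N - 1) * X / N + (N - 1) * X * (u / ((N - 1) * A) - 1 / N)) -
     A * (A - (N - 1) * X / N - (N - 1) * X * (u / ((N - 1) * A) - 1 / N))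
     = N*K*(A-X)*(A-u)/A + (X^2 + 4*K*X + 2*N*K^2 - A*A)).
  { unfold u. field. nz. }
  rewrite hAA in E1. replace (X ^ 2 + 4 * K * X + 2 * N * K ^ 2 - (X ^ 2 + 4 * K * X + 2 * N * K ^ 2)) with 0 in E1 by ring.
  rewrite E1.
  assert (E2: A - u = 2*(N-2)*K^2/(A+u)).
  { assert (hAu: A + u <> 0) by (apply Rgt_not_eq; unfold Rgt, u in *; lra).
    apply Rmult_eq_reg_r with (A+u); [|exact hAu]. unfold Rdiv. rewrite Rmult_assoc, Rinv_l, Rmult_1_r by exact hAu.
    replace ((A-u)*(A+u)) with (A*A - u*u) by ring. rewrite hAA. unfold u. ring. }
  rewrite E2.
  assert (E3: N * K * (A - X) * (2 * (N - 2) * K ^ 2 / (A + u)) / A + 0 -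
     2 * N * (N - 2) * (N - 1) ^ 2 * K ^ 4 / ((N - 1) * X + g * (N - 1) * K) ^ 2
     = 2*N*(N-2)*K^3*((A-X)*(X+g*K)^2 - K*A*(A+u))/(A*(A+u)*(X+g*K)^2)).
  { field. split; [apply Rgt_not_eq; exact hgK|]. split; [apply Rgt_not_eq; unfold Rgt, u in *; lra|]. split; [apply Rgt_not_eq; lra|].
    replace ((N - 1) * X + g * (N - 1) * K) with ((N-1)*(X+g*K)) by ring. apply Rgt_not_eq; unfold Rgt; apply Rmult_lt_0_compat; lra. }
  assert (0 <= 2*N*(N-2)*K^3*((A-X)*(X+g*K)^2 - K*A*(A+u))/(A*(A+u)*(X+g*K)^2)).
  { unfold Rdiv. apply Rmult_le_pos; [|left; apply Rinv_0_lt_compat; apply Rmult_lt_0_compat; [apply Rmult_lt_0_compat; unfold u in *; lra | apply pow_lt; lra]].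
    apply Rmult_le_pos; [|lra]. left; pos. }
  lra.
Qed.

Theorem lemma2p3 (n : nat) (K : R) (hn : (4 <= n)%nat) (hK : 0 < K) :
  forall x : R, 0 <= x ->
  let N := INR n in
  let a := a_fun n K x in
  let ao := ao_fun n K x in
  let ao' := ao1 n K x in
  let ao'' := ao2 n K x in
  (* (i) *)
  4 * x * ao' ^ 2 / ao < 1 /\
  (* (ii) *)
  2 * x * ao'' + ao' < 2 * (N - 1) / (N * (N + 2)) /\
  (* (iii) *)
  (N - 2) / sqrt (N * (N - 1)) * sqrt (x * ao) + ao < x / N + N * K /\
  (* (iv) *)
  N * K * (ao + x * ao') - a * (ao - x * ao') >=
    2 * N * (N - 2) * (N - 1) ^ 2 * K ^ 4
    / (x + sqrt (2 + sqrt (2 * N)) * (N - 1) * K) ^ 2 /\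
  (* (v) *)
  2 * ao - x / N + x * ao' <=
    2 * sqrt (2 * N) * K - (N - 4) * x / (N * (N - 1))
    - 6 * (sqrt (2 * N) - 2) * K * x / (3 * x + 2 * sqrt (2 * N) * (N - 1) * K) /\
  (* (vi) *)
  x / (N - 1) * (a + N * K)
    - (x / (N - 1) + 2 * N * K) * (ao + a - N * K - x * ao')
    < - (2 * x * K / (N - 1)) + 2 * N * (N - 4) * K ^ 2.
Proof.
  intros x hx N a ao ao' ao''.
  assert (hN: 4 <= N) by (unfold N; apply le_INR in hn; simpl in hn; lra).
  assert (hd1: forall y, Derive (ao_fun n K) y = d1c n K y) by (intro y; apply is_derive_unique, d1_ok; auto).
  assert (hD: Derive (ao_fun n K) = d1c n K) by (apply functional_extensionality; exact hd1).
  assert (h1: ao' = d1c n K x) by (unfold ao', ao1; apply hd1).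
  assert (h2: ao'' = d2c n K x) by (unfold ao'', ao2; rewrite hD; apply is_derive_unique, d2_ok; auto).
  rewrite h1, h2. clear h1 h2 hD hd1 ao' ao''.
  unfold ao, ao_fun, a, a_fun, d1c, d2c. fold N.
  pose proof (Ff_pos n K x hn hK) as hF.
  change ((x / (N - 1) + 2 * K) ^ 2 + (2 * N - 4) * K ^ 2) with (Ff n K x).
  set (F := Ff n K x) in *.
  set (A := sqrt F).
  assert (hA: 0 < A) by (apply sqrt_lt_R0; exact hF).
  assert (hFA: F = A*A) by (symmetry; apply sqrt_sqrt; lra).
  rewrite hFA.
  set (X := x / (N - 1)).
  assert (hAA: A*A = X^2 + 4*K*X + 2*N*K^2) by (rewrite <- hFA; unfold F, Ff, X; fold N; ring).
  assert (hxX: x = (N-1)*X) by (unfold X; field; lra).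
  assert (hX: 0 <= X) by (unfold X; unfold Rdiv; apply Rmult_le_pos; [lra|left; apply Rinv_0_lt_compat; lra]).
  clearbody X. clearbody A. clear hFA. rewrite hxX. clear hxX.
  assert (hb: 0 < sqrt (2*N)) by (apply sqrt_lt_R0; lra).
  assert (hbb: sqrt (2*N) * sqrt (2*N) = 2*N) by (apply sqrt_sqrt; lra).
  set (b := sqrt (2*N)) in *.
  assert (hg: 0 < sqrt (2+b)) by (apply sqrt_lt_R0; lra).
  assert (hgg: sqrt (2+b) * sqrt (2+b) = 2+b) by (apply sqrt_sqrt; lra).
  set (g := sqrt (2+b)) in *.
  split; [|split; [|split; [|split; [|split]]]].
  - exact (item1 N K X A hN hK hX hA hAA).
  - exact (item2 N K X A hN hK hX hA hAA).
  - exact (item3 N K X A hN hK hX hA hAA).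
  - exact (item4 N K X A g b hN hK hX hA hAA hb hbb hg hgg).
  - exact (item5 N K X A b hN hK hX hA hAA hb hbb).
  - pose proof (item6 N K X A hN hK hX hA hAA) as H6. cbv zeta in H6.
    replace ((N-1)*X/(N-1)) with X in H6 by (field; lra). exact H6.
Qed.
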